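(* Fix an integer $k\ge2$. For each $3$-element subset $A=\{a,b,c\}$ of $\{0,1,\dots,k\}$ with $a<b<c$, let $\rho_A$ be the polymatroid on a $2$-element set $\{e,f\}$ given by $\rho_A(\emptyset)=0$, $\rho_A(\{e\})=b$, $\rho_A(\{f\})=c$, $\rho_A(\{e,f\})=a+c$. Then a $k$-polymatroid is an excluded minor for $\mathcal{Q}_k$ within the class of $k$-polymatroids (i.e., it is not in $\mathcal{Q}_k$ but all of its proper minors are) if and only if it is isomorphic to $\rho_A$ for some such $A$; thus $\mathcal{Q}_k$ has exactly $\binom{k+1}{3}$ excluded minors within the class of $k$-polymatroids.
   Context: A polymatroid on a finite set $E$ is a function $\rho:2^E\to\mathbb{Z}$ that is normalized, non-decreasing and submodular; it is a $k$-polymatroid if $\rho(\{e\})\le k$ for all $e$. For matroids $Q,L$ on $E$, $Q$ is a quotient of $L$ if there is a matroid $M$ and $A\subseteq E(M)$ with $L=M\backslash A$ and $Q=M/A$ (equivalently, $r_L-r_Q$ is non-decreasing). $\mathcal{Q}_k$ is the class of polymatroids of the form $r_{M_1}+\cdots+r_{M_k}$ where each $M_{i+1}$ ($i\in[k-1]$) is a quotient of (possibly equal to) $M_i$. Minors: $\rho_{\backslash A}(X)=\rho(X)$, $\rho_{/A}(X)=\rho(X\cup A)-\rho(A)$ for $X\subseteq E-A$; minors are $(\rho_{\backslash A})_{/B}$ for disjoint $A,B$, proper if $A\cup B\ne\emptyset$. Polymatroids are isomorphic if a bijection of ground sets preserves the rank function. *)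

(* Defs.v *)
From mathcomp Require Import all_boot all_order all_algebra.
Set Implicit Arguments. Unset Strict Implicit. Unset Printing Implicit Defensive.
Import Order.TTheory GRing.Theory Num.Theory.
Local Open Scope ring_scope.

Definition is_polymatroid (E : finType) (rho : {set E} -> int) : Prop :=
  [/\ rho set0 = 0,
      (forall X Y : {set E}, X \subset Y -> rho X <= rho Y) &
      (forall X Y : {set E}, rho (X :|: Y) + rho (X :&: Y) <= rho X + rho Y)].

Definition is_kpolymatroid (k : nat) (E : finType) (rho : {set E} -> int) : Prop :=
  is_polymatroid rho /\ forall e : E, rho [set e] <= k%:Z.

Definition is_matroid_rank (E : finType) (r : {set E} -> nat) : Prop :=
  [/\ (forall X : {set E}, r X <= #|X|)%N,
      (forall X Y : {set E}, X \subset Y -> r X <= r Y)%N &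
      (forall X Y : {set E}, r (X :|: Y) + r (X :&: Y) <= r X + r Y)%N].

(* Q is a quotient of L (both matroids on E): there is a matroid M on
   E (+) F (F the set A) with L = M \ A and Q = M / A.
   Deletion: r_L(X) = r_M(X); contraction: r_Q(X) = r_M(X u A) - r_M(A)
   (written additively to avoid truncated subtraction). *)
Definition is_quotient (E : finType) (rQ rL : {set E} -> nat) : Prop :=
  exists (F : finType) (rM : {set (E + F)%type} -> nat),
    is_matroid_rank rM /\
    forall X : {set E},
      rL X = rM (inl @: X) /\
      (rQ X + rM (inr @: [set: F]) = rM ((inl @: X) :|: (inr @: [set: F])))%N.

(* The class Q_k: rho = r_{M_1} + ... + r_{M_k} (indices 0..k-1 here), with
   each M_{i+1} a quotient of M_i. *)
Definition in_Qk (k : nat) (E : finType) (rho : {set E} -> int) : Prop :=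
  exists r : nat -> {set E} -> nat,
    [/\ (forall i, (i < k)%N -> is_matroid_rank (r i)),
        (forall i, (i.+1 < k)%N -> is_quotient (r i.+1) (r i)) &
        (forall X : {set E}, rho X = (\sum_(i < k) r i X)%N%:Z)].

(* Minor (rho \ A) / B on the ground set E - (A u B). *)
Definition minor (E : finType) (A B : {set E}) (rho : {set E} -> int)
  : {set {x : E | x \in ~: (A :|: B)}} -> int :=
  fun X => rho ([set val x | x in X] :|: B) - rho B.

Definition excluded_minor_Qk (k : nat) (E : finType) (rho : {set E} -> int) : Prop :=
  [/\ is_kpolymatroid k rho,
      ~ in_Qk k rho &
      (forall A B : {set E}, [disjoint A & B] -> A :|: B != set0 ->
         in_Qk k (@minor E A B rho))].

Definition poly_iso (E F : finType) (rho : {set E} -> int) (sig : {set F} -> int) : Prop :=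
  exists f : E -> F, bijective f /\ forall X : {set E}, sig (f @: X) = rho X.

(* rho_A on the 2-element set {e, f} = {false, true} (e = false, f = true). *)
Definition rhoA (a b c : nat) (X : {set bool}) : int :=
  if X == set0 then 0
  else if X == [set false] then b%:Z
  else if X == [set true] then c%:Z
  else (a + c)%N%:Z.

(* Main.v *)
Require Import Defs.
From mathcomp Require Import all_boot all_order all_algebra.
From mathcomp Require Import zify.
From Stdlib Require Import Classical.
Set Implicit Arguments. Unset Strict Implicit. Unset Printing Implicit Defensive.
Import Order.TTheory GRing.Theory Num.Theory.

Lemma inl_inj (E F : finType) : injective (@inl E F).
Proof. by move=> ? ? []. Qed.
Lemma inr_inj (E F : finType) : injective (@inr E F).
Proof. by move=> ? ? []. Qed.

Lemma preim_inl_inl (E F : finType) (X : {set E}) :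
  (@inl E F) @^-1: (inl @: X) = X.
Proof. by apply/setP => x; rewrite !inE mem_imset //; apply: inl_inj. Qed.
Lemma preim_inr_inl (E F : finType) (X : {set E}) :
  (@inr E F) @^-1: (inl @: X) = set0.
Proof. by apply/setP => x; rewrite !inE; apply/imsetP => -[y _]. Qed.
Lemma preim_inl_inr (E F : finType) (X : {set F}) :
  (@inl E F) @^-1: (inr @: X) = set0.
Proof. by apply/setP => x; rewrite !inE; apply/imsetP => -[y _]. Qed.
Lemma preim_inr_inr (E F : finType) (X : {set F}) :
  (@inr E F) @^-1: (inr @: X) = X.
Proof. by apply/setP => x; rewrite !inE mem_imset //; apply: inr_inj. Qed.

Lemma mem_ll (E F : finType) (X : {set E}) x : (@inl E F x \in inl @: X) = (x \in X).
Proof. by rewrite mem_imset //; apply: inl_inj. Qed.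
Lemma mem_rr (E F : finType) (X : {set F}) x : (@inr E F x \in inr @: X) = (x \in X).
Proof. by rewrite mem_imset //; apply: inr_inj. Qed.
Lemma mem_lr (E F : finType) (X : {set F}) x : (@inl E F x \in inr @: X) = false.
Proof. by apply/imsetP => -[y _]. Qed.
Lemma mem_rl (E F : finType) (X : {set E}) x : (@inr E F x \in inl @: X) = false.
Proof. by apply/imsetP => -[y _]. Qed.
Definition memLR := (mem_ll, mem_rr, mem_lr, mem_rl).

Lemma card_sum_split (E F : finType) (S : {set (E + F)%type}) :
  #|(@inl E F) @^-1: S| + #|(@inr E F) @^-1: S| = #|S|.
Proof.
set X := inl @^-1: S; set G := inr @^-1: S.
have HS : S = inl @: X :|: inr @: G.
  by apply/setP => -[x|x]; rewrite !inE !memLR !inE ?orbF.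
rewrite [in RHS]HS cardsU.
have -> : inl @: X :&: inr @: G = set0.
  by apply/setP => -[x|x]; rewrite !inE !memLR ?andbF.
by rewrite cards0 subn0 (card_imset _ (@inl_inj E F)) (card_imset _ (@inr_inj E F)).
Qed.

Lemma arith_sub (l1 l2 lu li q1 q2 qu qi g1 g2 gu gi d : nat) :
  lu + li <= l1 + l2 -> qu + qi <= q1 + q2 -> gu + gi = g1 + g2 ->
  gi <= g1 -> gi <= g2 -> li + q1 <= l1 + qi -> li + q2 <= l2 + qi ->
  minn (lu + gu) (qu + d) + minn (li + gi) (qi + d) <=
  minn (l1 + g1) (q1 + d) + minn (l2 + g2) (q2 + d).
Proof. lia. Qed.

Lemma quot_build (E : finType) (rQ rL : {set E} -> nat) :
  is_matroid_rank rQ -> is_matroid_rank rL ->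
  (forall X, rQ X <= rL X) ->
  (forall X Y : {set E}, X \subset Y -> rL X + rQ Y <= rL Y + rQ X) ->
  is_quotient rQ rL.
Proof.
move=> [Q1 Q2 Q3] [L1 L2 L3] QL Hd.
pose d := rL setT - rQ setT.
have Q0 : rQ set0 = 0 by apply/eqP; rewrite -leqn0 -(cards0 E) Q1.
have L0 : rL set0 = 0 by apply/eqP; rewrite -leqn0 -(cards0 E) L1.
have Hb : forall X, rL X <= rQ X + d.
  move=> X; have := Hd X setT (subsetT X); have := QL setT; rewrite /d; lia.
pose rM (S : {set (E + 'I_d)%type}) :=
  minn (rL (inl @^-1: S) + #|inr @^-1: S|) (rQ (inl @^-1: S) + d).
exists ('I_d : finType), rM; split.
- split.
  + move=> S; rewrite /rM -card_sum_split.
    apply: leq_trans (geq_minl _ _) _; rewrite leq_add2r; exact: L1.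
  + move=> S T ST; rewrite /rM leq_min; apply/andP; split.
      apply: leq_trans (geq_minl _ _) _; apply: leq_add; first by apply: L2; apply: preimsetS.
      by apply: subset_leq_card; apply: preimsetS.
    apply: leq_trans (geq_minr _ _) _; rewrite leq_add2r; apply: Q2; exact: preimsetS.
  + move=> S T; rewrite /rM !preimsetU !preimsetI.
    set X1 := inl @^-1: S; set X2 := inl @^-1: T.
    set G1 := inr @^-1: S; set G2 := inr @^-1: T.
    have hL := L3 X1 X2; have hQ := Q3 X1 X2.
    have hG := cardsUI G1 G2.
    have hG1 : #|G1 :&: G2| <= #|G1| by apply: subset_leq_card; apply: subsetIl.
    have hG2 : #|G1 :&: G2| <= #|G2| by apply: subset_leq_card; apply: subsetIr.
    have hd1 := Hd _ _ (subsetIl X1 X2).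
    have hd2 := Hd _ _ (subsetIr X1 X2).
    by apply: arith_sub.
- move=> X; rewrite /rM preim_inl_inl preim_inr_inl cards0 addn0 (minn_idPl (Hb X)); split => //.
  rewrite !preimsetU preim_inl_inl preim_inr_inl preim_inl_inr preim_inr_inr setU0 set0U.
  rewrite cardsT card_ord L0 Q0 minnn add0n.
  by rewrite (minn_idPr _) // leq_add2r.
Qed.

Lemma quot_diff (E : finType) (rQ rL : {set E} -> nat) :
  is_quotient rQ rL -> forall X Y : {set E}, X \subset Y -> rL X + rQ Y <= rL Y + rQ X.
Proof.
move=> [F [rM [[M1 M2 M3] H]]] X Y XY.
have [hX1 hX2] := H X; have [hY1 hY2] := H Y.
have := M3 (inl @: Y) (inl @: X :|: inr @: [set: F]).
have -> : inl @: Y :|: (inl @: X :|: inr @: [set: F]) = inl @: Y :|: inr @: [set: F].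
  apply/setP => -[x|x]; rewrite !inE !memLR ?orbT ?orbF //.
  by case xX: (x \in X); rewrite ?orbF ?orbT //= (subsetP XY).
have -> : inl @: Y :&: (inl @: X :|: inr @: [set: F]) = inl @: X.
  apply/setP => -[x|x]; rewrite !inE !memLR ?orbT ?orbF ?andbF //.
  by case xX: (x \in X); rewrite ?andbF ?andbT //= (subsetP XY).
lia.
Qed.

Lemma sum_ind (k d : nat) : \sum_(i < k) (i < d : nat) = minn d k.
Proof.
elim: k => [|k IH]; first by rewrite big_ord0 minn0.
rewrite big_ord_recr /= IH; case: (ltnP k d) => h /=; lia.
Qed.

Lemma antitone_ind (k : nat) (u : nat -> nat) :
  (forall i, i < k -> u i <= 1) -> (forall i, i.+1 < k -> u i.+1 <= u i) ->
  forall j, j < k -> u j = (j < \sum_(i < k) u i).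
Proof.
move=> H1 H2.
have Ha : forall i j, i <= j -> j < k -> u j <= u i.
  move=> i; elim=> [|j IH] ij jk; first by rewrite leqn0 in ij; rewrite (eqP ij).
  case: (ltngtP i j.+1) ij => // [ij _ | ->] //.
  by apply: leq_trans (H2 _ jk) (IH ij (ltnW jk)).
move=> j jk; have := H1 _ jk; case uj: (u j) => [|[|]] // _.
- have : \sum_(i < k) u i <= \sum_(i < k) (i < j : nat).
    apply: leq_sum => i _; case: (ltnP i j) => ji; first exact: H1.
    by have := Ha _ _ ji (ltn_ord i); rewrite uj leqn0 => /eqP ->.
  rewrite sum_ind => h; suff -> : (j < \sum_(i < k) u i) = false by [].
  apply/negbTE; rewrite -leqNgt.
  by apply: leq_trans h (geq_minl _ _).
- have : \sum_(i < k) (i < j.+1 : nat) <= \sum_(i < k) u i.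
    apply: leq_sum => i _; case: (ltnP i j.+1) => ij //.
    by have := Ha i j ij jk; rewrite uj.
  by rewrite sum_ind (minn_idPl jk) => ->.
Qed.

Lemma rank0 (E : finType) (r : {set E} -> nat) : is_matroid_rank r -> r set0 = 0.
Proof. by case=> H1 _ _; apply/eqP; rewrite -leqn0 -(cards0 E) H1. Qed.

Lemma layer k (E : finType) (sig : {set E} -> int) (r : nat -> {set E} -> nat) :
  (forall i, i < k -> is_matroid_rank (r i)) ->
  (forall i, i.+1 < k -> is_quotient (r i.+1) (r i)) ->
  (forall X, sig X = Posz (\sum_(i < k) r i X)) ->
  forall e f : E, e != f -> forall j, j < k ->
  r j [set e; f] = ((Posz j < sig [set e])%R + (Posz j < sig [set e; f] - sig [set e])%R)%N.
Proof.
move=> Hm Hq Hs e f ef j jk.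
have U1 : forall i, i < k -> r i [set e] <= 1.
  by move=> i ik; case: (Hm i ik) => H1 _ _; rewrite -(cards1 e) H1.
have U2 : forall i, i.+1 < k -> r i.+1 [set e] <= r i [set e].
  move=> i ik; have := quot_diff (Hq i ik) (sub0set [set e]).
  rewrite (rank0 (Hm i (ltnW ik))) (rank0 (Hm i.+1 ik)); lia.
have Mo : forall i, i < k -> r i [set e] <= r i [set e; f].
  move=> i ik; case: (Hm i ik) => _ H2 _; apply: H2; rewrite sub1set !inE eqxx //.
have V1 : forall i, i < k -> r i [set e; f] - r i [set e] <= 1.
  move=> i ik; case: (Hm i ik) => H1 _ H3.
  have := H3 [set e] [set f].
  have -> : [set e] :&: [set f] = set0.
    apply/setP => x; rewrite !inE; case: eqP => // ->; exact: negbTE.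
  have := H1 [set f]; rewrite cards1 rank0 //; last exact: Hm.
  lia.
have V2 : forall i, i.+1 < k -> r i.+1 [set e; f] - r i.+1 [set e] <= r i [set e; f] - r i [set e].
  move=> i ik; have := quot_diff (Hq i ik) (_ : [set e] \subset [set e; f]).
  have := Mo i.+1 ik; have := Mo i (ltnW ik).
  have sef : [set e] \subset [set e; f] by rewrite sub1set !inE eqxx.
  move=> a b c; have := c sef; lia.
have Eu := antitone_ind U1 U2 jk.
have Ev := antitone_ind (u := fun i => r i [set e; f] - r i [set e]) V1 V2 jk.
have Hsum : \sum_(i < k) (r i [set e; f] - r i [set e]) + \sum_(i < k) r i [set e]
            = \sum_(i < k) r i [set e; f].
  rewrite -big_split /=; apply: eq_bigr => i _; rewrite subnK //; exact: Mo.
rewrite !Hs -Hsum PoszD addrK !ltz_nat -Eu -Ev /= addnC subnK //; exact: Mo.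
Qed.

Definition step (E : finType) (rho : {set E} -> int) (j : nat) (X : {set E}) (e : E) : bool :=
  (Posz j < rho X - rho (X :\ e))%R.

Fixpoint rk_aux (E : finType) (rho : {set E} -> int) (j : nat) (n : nat) (X : {set E}) : nat :=
  match n with
  | 0 => 0
  | n'.+1 => match [pick x in X] with
             | None => 0
             | Some m => rk_aux rho j n' (X :\ m) + step rho j X m
             end
  end.

Definition rk (E : finType) (rho : {set E} -> int) (j : nat) (X : {set E}) : nat :=
  rk_aux rho j #|X| X.

Definition SW (k : nat) (E : finType) (rho : {set E} -> int) : Prop :=
  forall (X : {set E}) (e m : E) (j : nat), e \in X -> m \in X -> e != m -> j < k ->
    step rho j (X :\ m) e + step rho j X m = step rho j (X :\ e) m + step rho j X e.

Lemma rk0 (E : finType) (rho : {set E} -> int) j : rk rho j set0 = 0.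
Proof. by rewrite /rk cards0. Qed.

Lemma rk_incr k (E : finType) (rho : {set E} -> int) j : SW k rho -> j < k ->
  forall (X : {set E}) (e : E), e \in X -> rk rho j X = rk rho j (X :\ e) + step rho j X e.
Proof.
move=> Hsw jk.
suff H : forall n (X : {set E}), #|X| = n -> forall e, e \in X -> rk rho j X = rk rho j (X :\ e) + step rho j X e.
  by move=> X; apply: H.
elim=> [|n IH] X HX e eX.
  by move: eX; rewrite (cards0_eq HX) inE.
have cD : forall a, a \in X -> #|X :\ a| = n.
  by move=> a aX; move: HX; rewrite (cardsD1 a) aX add1n => -[].
have -> : rk rho j X = rk_aux rho j n.+1 X by rewrite /rk HX.
rewrite /=; case: pickP => [m mX|none]; last by have := none e; rewrite eX.
have Hm : rk_aux rho j n (X :\ m) = rk rho j (X :\ m) by rewrite /rk cD.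
rewrite Hm; case: (eqVneq e m) => [-> //|em].
have eXm : e \in X :\ m by rewrite !inE em.
have mXe : m \in X :\ e by rewrite !inE eq_sym em.
rewrite (IH _ (cD _ mX) e eXm) (IH _ (cD _ eX) m mXe).
have -> : X :\ m :\ e = X :\ e :\ m by rewrite !setDDl setUC.
have := Hsw X e m j eX mX em jk; lia.
Qed.

Lemma set_ind (E : finType) (P : {set E} -> Prop) :
  P set0 -> (forall (X : {set E}) (e : E), e \in X -> P (X :\ e) -> P X) -> forall X, P X.
Proof.
move=> H0 HS.
suff H : forall n (X : {set E}), #|X| = n -> P X by move=> X; apply: (H _ X erefl).
elim=> [|n IH] X HX; first by rewrite (cards0_eq HX).
have [e eX] : exists e, e \in X.
  by apply/set0Pn; apply/eqP => X0; rewrite X0 cards0 in HX.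
by apply: (HS X e eX); apply: IH; move: HX; rewrite (cardsD1 e) eX add1n => -[] ->.
Qed.

Lemma set_sind (E : finType) (P : {set E} -> Prop) :
  (forall Y : {set E}, (forall Z : {set E}, #|Z| < #|Y| -> P Z) -> P Y) -> forall Y, P Y.
Proof.
move=> H.
suff K : forall n (Y : {set E}), #|Y| <= n -> P Y by move=> Y; apply: (K _ Y (leqnn _)).
elim=> [|n IH] Y HY; apply: H => Z HZ; first by move: (leq_trans HZ HY).
by apply: IH; rewrite -ltnS (leq_trans HZ HY).
Qed.

Lemma cardD1lt (E : finType) (Y : {set E}) e : e \in Y -> #|Y :\ e| < #|Y|.
Proof. by move=> eY; rewrite [X in _ < X](cardsD1 e) eY. Qed.

Lemma step_anti (E : finType) (rho : {set E} -> int) j (X Y : {set E}) e :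
  is_polymatroid rho -> X \subset Y -> e \in X ->
  (step rho j Y e <= step rho j X e)%N.
Proof.
move=> [_ _ Hsub] XY eX; rewrite /step.
have H := Hsub (Y :\ e) X.
have E1 : Y :\ e :|: X = Y.
  apply/setP => x; rewrite !inE; case: eqP => [->|_] /=; first by rewrite eX (subsetP XY).
  by case xX: (x \in X); rewrite ?orbT ?orbF // (subsetP XY).
have E2 : (Y :\ e) :&: X = X :\ e.
  apply/setP => x; rewrite !inE; case: eqP => [->|_] //=.
  by case xX: (x \in X); rewrite ?andbT ?andbF // (subsetP XY).
rewrite E1 E2 in H.
case h: (Posz j < rho Y - rho (Y :\ e))%R => //=.
have : (rho Y - rho (Y :\ e) <= rho X - rho (X :\ e))%R.
  by lia.
by move=> h2; rewrite (lt_le_trans h h2).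
Qed.

Lemma step_succ (E : finType) (rho : {set E} -> int) j X e :
  (step rho j.+1 X e <= step rho j X e)%N.
Proof.
rewrite /step; case h: (Posz j.+1 < _)%R => //=.
by rewrite (@lt_trans _ _ (Posz j.+1)) // ltz_nat.
Qed.


Lemma rk_card k (E : finType) (rho : {set E} -> int) j : SW k rho -> j < k ->
  forall X, rk rho j X <= #|X|.
Proof.
move=> Hsw jk; apply: set_ind => [|X e eX IH]; first by rewrite rk0.
rewrite (rk_incr Hsw jk eX) [X in _ <= X](cardsD1 e) eX addnC.
by apply: leq_add => //; case: step.
Qed.

Lemma rk_mono k (E : finType) (rho : {set E} -> int) j : SW k rho -> j < k ->
  forall Y X : {set E}, X \subset Y -> rk rho j X <= rk rho j Y.
Proof.
move=> Hsw jk; apply: set_sind => Y IH X XY.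
case: (boolP (Y \subset X)) => [YX|/subsetPn [e eY eX]].
  by have -> : X = Y by apply/eqP; rewrite eqEsubset XY YX.
rewrite (rk_incr Hsw jk eY); apply: leq_trans (leq_addr _ _).
apply: IH; first exact: cardD1lt.
apply/subsetP => x xX; rewrite !inE (subsetP XY) // andbT.
by apply/eqP => xe; rewrite -xe xX in eX.
Qed.

Lemma rk_submod k (E : finType) (rho : {set E} -> int) j : is_polymatroid rho ->
  SW k rho -> j < k ->
  forall Y X : {set E}, rk rho j (X :|: Y) + rk rho j (X :&: Y) <= rk rho j X + rk rho j Y.
Proof.
move=> Hp Hsw jk; apply: set_sind => Y IH X.
case: (boolP (Y \subset X)) => [YX|/subsetPn [e eY eX]].
  by rewrite (setUidPl YX) (setIidPr YX).
have eU : e \in X :|: Y by rewrite inE eY orbT.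
rewrite (rk_incr Hsw jk eU) (rk_incr Hsw jk eY).
have -> : (X :|: Y) :\ e = X :|: (Y :\ e).
  apply/setP => x; rewrite !inE; case: eqP => [->|_] //=; by rewrite (negbTE eX).
have -> : X :&: Y = X :&: (Y :\ e).
  apply/setP => x; rewrite !inE; case: eqP => [->|_] //=; by rewrite (negbTE eX).
have := IH (Y :\ e) (cardD1lt eY) X.
have := step_anti j Hp (subsetUr X Y) eY.
lia.
Qed.

Lemma rk_quot k (E : finType) (rho : {set E} -> int) j : SW k rho -> j.+1 < k ->
  (forall X, rk rho j.+1 X <= rk rho j X) /\
  (forall X Y : {set E}, X \subset Y -> rk rho j X + rk rho j.+1 Y <= rk rho j Y + rk rho j.+1 X).
Proof.
move=> Hsw jk; have jk' : j < k by apply: ltnW.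
split.
  apply: set_ind => [|X e eX IH]; first by rewrite !rk0.
  rewrite (rk_incr Hsw jk eX) (rk_incr Hsw jk' eX); apply: leq_add => //; exact: step_succ.
move=> X Y; elim/set_sind: Y X => Y IH X XY.
case: (boolP (Y \subset X)) => [YX|/subsetPn [e eY eX]].
  by have -> : X = Y by apply/eqP; rewrite eqEsubset XY YX.
rewrite (rk_incr Hsw jk eY) (rk_incr Hsw jk' eY).
have XY' : X \subset Y :\ e.
  apply/subsetP => x xX; rewrite !inE (subsetP XY) // andbT.
  by apply/eqP => xe; rewrite -xe xX in eX.
have := IH (Y :\ e) (cardD1lt eY) X XY'.
have := step_succ rho j Y e.
lia.
Qed.

Lemma rk_sum k (E : finType) (rho : {set E} -> int) : is_kpolymatroid k rho -> SW k rho ->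
  forall X, rho X = Posz (\sum_(i < k) rk rho i X).
Proof.
move=> [[H0 Hmo Hsub] Hk] Hsw.
apply: set_ind => [|X e eX IH].
  by rewrite H0 big1 // => i _; rewrite rk0.
have Hsum : \sum_(i < k) rk rho i X = \sum_(i < k) rk rho i (X :\ e) + \sum_(i < k) step rho i X e.
  rewrite -big_split /=; apply: eq_bigr => i _; exact: (rk_incr Hsw (ltn_ord i) eX).
have h1 := Hsub (X :\ e) [set e].
rewrite setUC setD1K // in h1.
have E2 : (X :\ e) :&: [set e] = set0.
  by apply/setP => x; rewrite !inE; case: eqP => [->|]; rewrite ?andbF.
rewrite E2 H0 in h1.
have h2 := Hmo _ _ (subD1set X e).
have h3 := Hk e.
set dl := (rho X - rho (X :\ e))%R.
have dl0 : (0 <= dl)%R by rewrite /dl; lia.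
have dlk : (dl <= Posz k)%R by rewrite /dl; lia.
have Hd : Posz `|dl|%N = dl by rewrite gez0_abs.
have Hs : \sum_(i < k) step rho i X e = `|dl|%N.
  rewrite (eq_bigr (fun i : 'I_k => (i < `|dl|%N : nat))) ?sum_ind.
    by apply/minn_idPl; rewrite -lez_nat Hd.
  by move=> i _; rewrite /step -/dl -Hd ltz_nat.
rewrite Hsum Hs PoszD Hd -IH /dl; lia.
Qed.

Lemma constr k (E : finType) (rho : {set E} -> int) : is_kpolymatroid k rho -> SW k rho ->
  in_Qk k rho.
Proof.
move=> Hkp Hsw; have Hp := Hkp.1.
have Hm : forall i, i < k -> is_matroid_rank (rk rho i).
  move=> i ik; split; [exact: rk_card Hsw ik | move=> X Y XY; exact: (rk_mono Hsw ik XY) | ].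
  by move=> X Y; apply: rk_submod Hp Hsw ik Y X.
exists (rk rho); split => //.
  move=> i ik; have [h1 h2] := rk_quot Hsw ik.
  by apply: quot_build => //; apply: Hm => //; apply: ltnW.
exact: rk_sum.
Qed.

Lemma rhoAE a b c (X : {set bool}) :
  rhoA a b c X = if false \in X then (if true \in X then Posz (a + c) else Posz b)
                 else (if true \in X then Posz c else 0%R).
Proof.
rewrite /rhoA.
case fX: (false \in X); case tX: (true \in X).
- have -> : (X == set0) = false by apply/negbTE/set0Pn; exists false.
  have -> : (X == [set false]) = false by apply/negbTE; apply/eqP => /setP /(_ true); rewrite tX inE.
  by have -> : (X == [set true]) = false by apply/negbTE; apply/eqP => /setP /(_ false); rewrite fX inE.
- have -> : (X == set0) = false by apply/negbTE/set0Pn; exists false.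
  by have -> : X == [set false] by apply/eqP/setP => -[]; rewrite !inE ?fX ?tX.
- have -> : (X == set0) = false by apply/negbTE/set0Pn; exists true.
  have -> : (X == [set false]) = false by apply/negbTE; apply/eqP => /setP /(_ true); rewrite tX inE.
  by have -> : X == [set true] by apply/eqP/setP => -[]; rewrite !inE ?fX ?tX.
- by have -> : X == set0 by apply/eqP/setP => -[]; rewrite !inE ?fX ?tX.
Qed.

Lemma rhoA_kpoly k a b c : a < b -> b < c -> c <= k -> is_kpolymatroid k (rhoA a b c).
Proof.
move=> ab bc ck; split; first split.
- by rewrite rhoAE !inE.
- move=> X Y /subsetP XY; rewrite !rhoAE.
  have hf := XY false; have ht := XY true.
  case: (false \in X) hf; case: (true \in X) ht; case: (false \in Y); case: (true \in Y);
    move=> //= h1 h2; rewrite ?lez_nat; try (have := h1 isT); try (have := h2 isT); lia.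
- move=> X Y; rewrite !rhoAE !inE.
  case: (false \in X); case: (true \in X); case: (false \in Y); case: (true \in Y) => /=; lia.
- by move=> e; rewrite rhoAE !inE; case: e => /=; lia.
Qed.

Lemma iso_kpoly k (E F : finType) (rho : {set E} -> int) (sig : {set F} -> int) :
  poly_iso rho sig -> is_kpolymatroid k sig -> is_kpolymatroid k rho.
Proof.
move=> [f [fb Hf]] [[H0 Hm Hs] Hk]; have fi := bij_inj fb.
split; first split.
- by rewrite -Hf imset0.
- by move=> X Y XY; rewrite -!Hf; apply: Hm; apply: imsetS.
- move=> X Y; rewrite -!Hf imsetU imsetI; first exact: Hs.
  by move=> x y _ _; apply: fi.
- by move=> e; rewrite -Hf imset_set1.
Qed.

Lemma ar1 (u i x y b : int) : (u + i <= x + y -> (u - b) + (i - b) <= (x - b) + (y - b))%R.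
Proof. lia. Qed.
Lemma ar2 (k : nat) (s i se sB : int) : (se <= Posz k -> 0 <= i -> s + i <= se + sB -> s - sB <= Posz k)%R.
Proof. lia. Qed.

Lemma minor_kpoly k (E : finType) (A B : {set E}) (rho : {set E} -> int) :
  is_kpolymatroid k rho -> is_kpolymatroid k (@minor E A B rho).
Proof.
move=> [[H0 Hm Hs] Hk]; rewrite /minor.
split; first split.
- by rewrite imset0 set0U subrr.
- move=> X Y XY; have := Hm _ _ (setSU B (imsetS val XY)); by move=> h; apply: lerB.
- move=> X Y; rewrite imsetU imsetI; last by move=> x y _ _; apply: val_inj.
  have := Hs ([set val x | x in X] :|: B) ([set val x | x in Y] :|: B).
  rewrite -setUIl setUACA setUid; exact: ar1.
- move=> e; rewrite imset_set1.
  have := Hs [set val e] B; have := Hm _ _ (sub0set ([set val e] :&: B)); have := Hk (val e).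
  rewrite H0; exact: ar2.
Qed.


Lemma two_elem (E : finType) (g : E -> bool) : bijective g ->
  forall u v : E, u != v -> forall w, w = u \/ w = v.
Proof.
move=> gb u v uv w; have gi := bij_inj gb.
have guv : g u != g v by rewrite (inj_eq gi).
case: (eqVneq (g w) (g u)) => [h|h]; first by left; apply: gi.
right; apply: gi; move: guv h; case: (g u); case: (g v); case: (g w) => //.
Qed.

Lemma excl_of_iso k (E : finType) (rho : {set E} -> int) a b c :
  a < b -> b < c -> c <= k -> poly_iso rho (rhoA a b c) -> excluded_minor_Qk k rho.
Proof.
move=> ab bc ck Hiso; have Hkp := iso_kpoly Hiso (rhoA_kpoly ab bc ck).
case: Hiso => g [gb Hg]; split => //.
- move=> [r [Hm Hq Hs]].
  case: (gb) => h gK hK.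
  have em : h false != h true by apply/eqP => /(congr1 g); rewrite !hK.
  have ak : a < k by lia.
  have L1 := layer Hm Hq Hs em ak.
  have me : h true != h false by rewrite eq_sym.
  have L2 := layer Hm Hq Hs me ak.
  have Es : [set h true; h false] = [set h false; h true] by rewrite /= setUC.
  rewrite Es L1 -!Hg !imsetU1 !imset_set1 !hK !rhoAE !inE /= in L2.
  move: L2; rewrite PoszD addrK ltxx subzn ?ltz_nat; lia.
- move=> A B _ nAB; apply: constr; first exact: minor_kpoly.
  move=> X e m j _ _ em _; exfalso.
  have vem : val e != val m by rewrite (inj_eq val_inj).
  case/set0Pn: nAB => y yAB.
  have := valP e; have := valP m; rewrite !inE.
  by case: (two_elem gb vem y) => <-; rewrite inE in yAB; rewrite yAB.
Qed.

Lemma rhoA_uniq a b c a' b' c' : a < b -> b < c -> a' < b' -> b' < c' ->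
  poly_iso (rhoA a b c) (rhoA a' b' c') -> [/\ a = a', b = b' & c = c'].
Proof.
move=> ab bc ab' bc' [g [gb Hg]]; have gi := bij_inj gb.
have H1 := Hg [set false]; have H2 := Hg [set true]; have H3 := Hg [set false; true].
rewrite imsetU1 !imset_set1 !rhoAE !inE /= in H1 H2 H3.
have gft : g false != g true by rewrite (inj_eq gi).
move: gft H1 H2 H3; case: (g false); case: (g true) => //= _ H1 H2 H3; split; lia.
Qed.

Lemma sets_two (E : finType) (e m : E) : e != m -> (forall w, w = e \/ w = m) ->
  forall X : {set E}, [\/ X = set0, X = [set e], X = [set m] | X = [set e; m]].
Proof.
move=> em Hall X.
have me : (m == e) = false by rewrite eq_sym (negbTE em).
case eX: (e \in X); case mX: (m \in X); [apply: Or44 | apply: Or42 | apply: Or43 | apply: Or41];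
  apply/setP => w; case: (Hall w) => ->; rewrite !inE ?eX ?mX ?eqxx ?me ?(negbTE em) //.
Qed.

Lemma iso_two k (E : finType) (rho : {set E} -> int) (e m : E) :
  e != m -> (forall w, w = e \/ w = m) -> is_kpolymatroid k rho ->
  (rho [set e] < rho [set m])%R -> (rho [set e; m] < rho [set e] + rho [set m])%R ->
  exists a b c : nat, [/\ a < b, b < c, c <= k & poly_iso rho (rhoA a b c)].
Proof.
move=> em Hall [[H0 Hmo Hsub] Hk] xy zxy.
have x0 := Hmo _ _ (sub0set [set e]); rewrite H0 in x0.
have yk := Hk m.
have zy : (rho [set m] <= rho [set e; m])%R by apply: Hmo; rewrite sub1set !inE eqxx orbT.
have Ha : Posz `|rho [set e; m] - rho [set m]|%N = (rho [set e; m] - rho [set m])%R.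
  by rewrite gez0_abs // subr_ge0.
have Hb : Posz `|rho [set e]|%N = rho [set e] by rewrite gez0_abs.
have Hc : Posz `|rho [set m]|%N = rho [set m] by rewrite gez0_abs //; lia.
exists `|rho [set e; m] - rho [set m]|%N, `|rho [set e]|%N, `|rho [set m]|%N.
split.
- by rewrite -ltz_nat Ha Hb; lia.
- by rewrite -ltz_nat Hb Hc.
- by rewrite -lez_nat Hc.
have me : (m == e) = false by rewrite eq_sym (negbTE em).
exists (fun w => w == m); split.
  exists (fun b : bool => if b then m else e).
    by move=> w; case: (Hall w) => ->; rewrite ?eqxx ?(negbTE em).
  by case => /=; rewrite ?eqxx ?(negbTE em).
move=> X; case: (sets_two em Hall X) => ->.
- by rewrite imset0 rhoAE !inE H0.
- by rewrite imset_set1 rhoAE !inE (negbTE em) /= Hb.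
- by rewrite imset_set1 rhoAE !inE eqxx /= Hc.
- by rewrite imsetU1 imset_set1 rhoAE !inE (negbTE em) !eqxx /= PoszD Ha Hc subrK.
Qed.

Lemma fail2 (x y z : int) (j : nat) :
  ((Posz j < x)%R + (Posz j < z - x)%R != (Posz j < y)%R + (Posz j < z - y)%R)%N ->
  x != y /\ z != (x + y)%R.
Proof.
move=> H; split; apply/eqP => h; move: H; rewrite h ?eqxx //.
by rewrite addrK (addrC x y) addrK addnC eqxx.
Qed.


Lemma iso_of_excl k (E : finType) (rho : {set E} -> int) :
  excluded_minor_Qk k rho ->
  exists a b c : nat, [/\ a < b, b < c, c <= k & poly_iso rho (rhoA a b c)].
Proof.
move=> [Hkp HnQ Hmin]; apply: NNPP => Hno; apply: HnQ; apply: (constr Hkp).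
move=> X e m j eX mX em jk.
apply/eqP; case: eqP => // /eqP Hne; exfalso; apply: Hno.
have [[H0 Hmo Hsub] Hk] := Hkp.
set Z := X :\ e :\ m.
have EZ : X :\ m :\ e = Z by rewrite /Z !setDDl setUC.
move: Hne; rewrite /step EZ.
rewrite -/Z.
case: (eqVneq (~: X :|: Z) set0) => [HAB | nAB] Hne.
- have Hall : forall w, w = e \/ w = m.
    move=> w; move/setP: HAB => /(_ w); rewrite !inE.
    case: (eqVneq w e) => [->|we]; first by left.
    case: (eqVneq w m) => [->|wm]; first by right.
    by case: (w \in X).
  have me : (m == e) = false by rewrite eq_sym (negbTE em).
  have EX : X = [set e; m].
    by apply/setP => w; case: (Hall w) => ->; rewrite !inE ?eX ?mX eqxx ?orbT.
  have E1 : X :\ m = [set e].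
    by rewrite EX; apply/setP => w; case: (Hall w) => ->; rewrite !inE ?eqxx ?me ?(negbTE em).
  have E2 : X :\ e = [set m].
    by rewrite EX; apply/setP => w; case: (Hall w) => ->; rewrite !inE ?eqxx ?me ?(negbTE em).
  have E0 : Z = set0.
    by apply/setP => w; rewrite /Z; case: (Hall w) => ->; rewrite !inE ?eqxx ?me ?(negbTE em) ?andbF.
  rewrite E1 E2 E0 H0 !subr0 EX in Hne.
  have [xy zxy] := fail2 Hne.
  have hs := Hsub [set e] [set m].
  have E3 : [set e] :&: [set m] = set0.
    by apply/setP => w; rewrite !inE; case: eqP => // ->; rewrite (negbTE em).
  rewrite E3 H0 addr0 in hs.
  have zlt : (rho [set e; m] < rho [set e] + rho [set m])%R.
    by rewrite lt_neqAle zxy.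
  case: (ltgtP (rho [set e]) (rho [set m])) => [lt|lt|eq]; last by rewrite eq eqxx in xy.
    exact: iso_two em Hall Hkp lt zlt.
  have Hall' : forall w, w = m \/ w = e by move=> w; case: (Hall w); [right | left].
  have me' : m != e by rewrite me.
  apply: (iso_two me' Hall' Hkp lt).
  by rewrite [[set m; e]]setUC addrC.
- have Hd : [disjoint ~: X & Z].
    rewrite -setI_eq0; apply/eqP/setP => w; rewrite !inE.
    by case: (w \in X); rewrite ?andbF.
  have := Hmin _ _ Hd nAB. case=> r [Hm Hq Hs].
  have he : e \in ~: (~: X :|: Z) by rewrite !inE eX eqxx /= ?andbF.
  have hm : m \in ~: (~: X :|: Z) by rewrite !inE mX eqxx /= ?andbF.
  pose e' : {x : E | x \in ~: (~: X :|: Z)} := exist _ e he.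
  pose m' : {x : E | x \in ~: (~: X :|: Z)} := exist _ m hm.
  have e'm' : e' != m' by apply/eqP => -[] /eqP; rewrite (negbTE em).
  have m'e' : m' != e' by rewrite eq_sym.
  have L1 := layer Hm Hq Hs e'm' jk.
  have L2 := layer Hm Hq Hs m'e' jk.
  have Es : [set m'; e'] = [set e'; m'] by exact: (setUC [set m'] [set e']).
  rewrite Es L1 in L2.
  rewrite /minor !imsetU1 !imset_set1 /= in L2.
  have me : (m == e) = false by rewrite eq_sym (negbTE em).
  have F1 : e |: Z = X :\ m.
    apply/setP => w; rewrite /Z !inE; case: (eqVneq w e) => [->|we]; [|case: (eqVneq w m) => [->|wm]];
    rewrite ?eX ?mX ?eqxx ?me ?(negbTE em) ?(negbTE we) ?(negbTE wm) /= ?andbF ?andbT ?orbF ?orbT //.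
  have F2 : m |: Z = X :\ e.
    apply/setP => w; rewrite /Z !inE; case: (eqVneq w e) => [->|we]; [|case: (eqVneq w m) => [->|wm]];
    rewrite ?eX ?mX ?eqxx ?me ?(negbTE em) ?(negbTE we) ?(negbTE wm) /= ?andbF ?andbT ?orbF ?orbT //.
  have F3 : [set e; m] :|: Z = X.
    apply/setP => w; rewrite /Z !inE; case: (eqVneq w e) => [->|we]; [|case: (eqVneq w m) => [->|wm]];
    rewrite ?eX ?mX ?eqxx ?me ?(negbTE em) ?(negbTE we) ?(negbTE wm) /= ?andbF ?andbT ?orbF ?orbT //.
  have K : forall a b z : int, (a - z - (b - z) = a - b)%R by move=> *; lia.
  rewrite F1 F2 F3 !K in L2.
  by rewrite L2 eqxx in Hne.
Qed.

Theorem theorem5p2 (k : nat) : (2 <= k)%N ->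
  (forall (E : finType) (rho : {set E} -> int),
     excluded_minor_Qk k rho <->
     exists a b c : nat,
       [/\ (a < b)%N, (b < c)%N, (c <= k)%N & poly_iso rho (rhoA a b c)]) /\
  (forall a b c a' b' c' : nat,
     (a < b)%N -> (b < c)%N -> (c <= k)%N ->
     (a' < b')%N -> (b' < c')%N -> (c' <= k)%N ->
     poly_iso (rhoA a b c) (rhoA a' b' c') -> [/\ a = a', b = b' & c = c']).
Proof.
move=> _; split.
- move=> E rho; split; first exact: iso_of_excl.
  by case=> a [b [c [ab bc ck Hi]]]; exact: excl_of_iso ab bc ck Hi.
- by move=> a b c a' b' c' ab bc _ ab' bc' _; exact: rhoA_uniq.
Qed.
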